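(* An element $r\in\mathrm{Im}(1-\tau)\subset\overline{\mathfrak L}\otimes\overline{\mathfrak L}$ satisfies the classical Yang–Baxter equation $c(r)=0$ if and only if it satisfies the modified Yang–Baxter equation $x\cdot c(r)=0$ for all $x\in\overline{\mathfrak L}$.
   Context: Let $\mathbb F$ be a field of characteristic $0$ and let $\Gamma$ be an additive subgroup of $\mathbb F$ with $\mathbb Z\subseteq\Gamma$. The centerless generalized Heisenberg–Virasoro algebra $\overline{\mathfrak L}$ is the Lie algebra with basis $\{L_x:x\in\Gamma\}\cup\{I_x:x\in\Gamma\setminus\{0\}\}$ (with the convention $I_0=0$) and brackets $[L_x,L_y]=(y-x)L_{x+y}$, $[L_x,I_y]=yI_{x+y}$, $[I_x,I_y]=0$. $\tau(a\otimes b)=b\otimes a$. For $r=\sum_i a_i\otimes b_i$, define $$c(r)=\sum_{i,j}\big([a_i,a_j]\otimes b_i\otimes b_j+a_i\otimes[b_i,a_j]\otimes b_j+a_i\otimes a_j\otimes[b_i,b_j]\big)\in\overline{\mathfrak L}^{\otimes3},$$ i.e. $c(r)=[r^{12},r^{13}]+[r^{12},r^{23}]+[r^{13},r^{23}]$. The action on $\overline{\mathfrak L}^{\otimes 3}$ is the diagonal adjoint action. *)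

(* Defs.v *)
From HB Require Import structures.
From mathcomp Require Import all_boot all_order all_algebra.
Set Implicit Arguments. Unset Strict Implicit. Unset Printing Implicit Defensive.
Import GRing.Theory.
Local Open Scope ring_scope.

(* Basis indices of the centerless generalized Heisenberg-Virasoro algebra:
   (false, x) stands for L_x, (true, x) stands for I_x.  The convention
   I_0 = 0 is implemented by the coefficient functions below, which always
   assign coefficient 0 to the index (true, 0). *)
Definition hvix (F : fieldType) := (bool * F)%type.

Definition is_zero_ix (F : fieldType) (b : hvix F) : bool := b.1 && (b.2 == 0).

(* Elements of Lbar, Lbar (x) Lbar, Lbar^(x)3 as finite formal sums
   (coefficient, basis index tuple). *)
Definition hv1 (F : fieldType) := seq (F * hvix F).
Definition hv2 (F : fieldType) := seq (F * (hvix F * hvix F)).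
Definition hv3 (F : fieldType) := seq (F * (hvix F * hvix F * hvix F)).

Definition coef1 (F : fieldType) (v : hv1 F) (b : hvix F) : F :=
  if is_zero_ix b then 0 else \sum_(t <- v) (if t.2 == b then t.1 else 0).
Definition coef2 (F : fieldType) (v : hv2 F) (b : hvix F * hvix F) : F :=
  if is_zero_ix b.1 || is_zero_ix b.2 then 0
  else \sum_(t <- v) (if t.2 == b then t.1 else 0).
Definition coef3 (F : fieldType) (v : hv3 F) (b : hvix F * hvix F * hvix F) : F :=
  if [|| is_zero_ix b.1.1, is_zero_ix b.1.2 | is_zero_ix b.2] then 0
  else \sum_(t <- v) (if t.2 == b then t.1 else 0).

Definition valid_ix (F : fieldType) (G : {pred F}) (b : hvix F) : bool := b.2 \in G.
Definition valid1 (F : fieldType) (G : {pred F}) (v : hv1 F) : bool :=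
  all (fun t => valid_ix G t.2) v.
Definition valid2 (F : fieldType) (G : {pred F}) (v : hv2 F) : bool :=
  all (fun t => valid_ix G t.2.1 && valid_ix G t.2.2) v.

Definition hvbr (F : fieldType) (a b : hvix F) : hv1 F :=
  match a, b with
  | (false, x), (false, y) => [:: (y - x, (false, x + y))]
  | (false, x), (true, y) => [:: (y, (true, x + y))]
  | (true, x), (false, y) => [:: (- x, (true, x + y))]
  | (true, _), (true, _) => [::]
  end.

Definition tau2 (F : fieldType) (s : hv2 F) : hv2 F :=
  [seq (t.1, (t.2.2, t.2.1)) | t <- s].
Definition one_minus_tau (F : fieldType) (s : hv2 F) : hv2 F :=
  s ++ [seq (- t.1, t.2) | t <- tau2 s].

(* c(r) = [r12,r13] + [r12,r23] + [r13,r23], i.e.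
   sum_{i,j} [a_i,a_j] (x) b_i (x) b_j + a_i (x) [b_i,a_j] (x) b_j
             + a_i (x) a_j (x) [b_i,b_j]. *)
Definition cyb (F : fieldType) (r : hv2 F) : hv3 F :=
  flatten [seq
    let: (ci, (ai, bi)) := ti in
    let: (cj, (aj, bj)) := tj in
    [seq (ci * cj * k.1, (k.2, bi, bj)) | k <- hvbr ai aj] ++
    [seq (ci * cj * k.1, (ai, k.2, bj)) | k <- hvbr bi aj] ++
    [seq (ci * cj * k.1, (ai, aj, k.2)) | k <- hvbr bi bj]
  | ti <- r, tj <- r].

Definition act3 (F : fieldType) (x : hv1 F) (w : hv3 F) : hv3 F :=
  flatten [seq
    let: (d, e) := tx in
    let: (c, (u, v, z)) := tw in
    [seq (d * c * k.1, (k.2, v, z)) | k <- hvbr e u] ++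
    [seq (d * c * k.1, (u, k.2, z)) | k <- hvbr e v] ++
    [seq (d * c * k.1, (u, v, k.2)) | k <- hvbr e z]
  | tx <- x, tw <- w].

(* Main.v *)
Require Import Defs.
From HB Require Import structures.
From mathcomp Require Import all_boot all_order all_algebra.
Import GRing.Theory.
Local Open Scope ring_scope.

Section Aux.
Variable F : fieldType.
Hypothesis hchar : [pchar F] =i pred0.

Lemma natr_inj : injective (fun n : nat => (n%:R : F)).
Proof.
have H := iffLR (pcharf0P F) hchar.
suff K: forall m n : nat, (m <= n)%N -> (m%:R : F) = n%:R -> m = n.
  move=> m n /= E; case: (leqP m n) => h; first exact: K.
  by symmetry; apply: K; [exact: ltnW|].
move=> m n h E; apply/eqP; rewrite eqn_leq h /=.
have : ((n - m)%:R : F) == 0 by rewrite natrB // E subrr.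
by rewrite H subn_eq0.
Qed.

Lemma exists_nat_notin (l : seq F) : exists k : nat, (k%:R : F) \notin l.
Proof.
case: (boolP (all (fun k : nat => (k%:R : F) \in l) (iota 0 (size l).+1))).
  move=> /allP H; exfalso.
  have U : uniq [seq (k%:R : F) | k <- iota 0 (size l).+1].
    by rewrite map_inj_uniq ?iota_uniq //; apply: natr_inj.
  have S : {subset [seq (k%:R : F) | k <- iota 0 (size l).+1] <= l}.
    by move=> y /mapP [k kin ->]; apply: H.
  by have := uniq_leq_size U S; rewrite size_map size_iota ltnn.
by move=> /allPn [k _ kn]; exists k.
Qed.

Definition idx3 := (hvix F * hvix F * hvix F)%type.

Definition rc (w : hv3 F) (b : idx3) : F :=
  \sum_(t <- w) (if t.2 == b then t.1 else 0).

Definition G (tx : F * hvix F) (tw : F * idx3) : hv3 F :=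
    let: (d, e) := tx in
    let: (c, (u, v, z)) := tw in
    [seq (d * c * k.1, (k.2, v, z)) | k <- hvbr e u] ++
    [seq (d * c * k.1, (u, k.2, z)) | k <- hvbr e v] ++
    [seq (d * c * k.1, (u, v, k.2)) | k <- hvbr e z].

Definition h tx (u : idx3) t := rc (G tx (1, u)) t.

Lemma rc_act (x : hv1 F) w t :
  rc (act3 x w) t = \sum_(tx <- x) \sum_(tw <- w) tw.1 * h tx tw.2 t.
Proof.
have -> : act3 x w = flatten [seq G tx tw | tx <- x, tw <- w] by [].
rewrite /rc big_flatten /= big_allpairs_dep /=.
apply: eq_bigr => [[d e] _]; apply: eq_bigr => [[c [[u v] z]] _].
rewrite /h /rc /G /= !big_cat /= !big_map !mulrDr !mulr_sumr.
by congr (_ + (_ + _)); apply: eq_bigr => k _; case: ifP;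
  rewrite ?mulr0 // mulr1 mulrCA mulrA.
Qed.

Lemma hvbr_zero (e a : hvix F) (k : F * hvix F) : is_zero_ix a -> k \in hvbr e a -> k.1 = 0.
Proof.
case: a => [[] y]; rewrite /is_zero_ix //= => /eqP ->; case: e => [[] x] //=.
by rewrite inE => /eqP ->.
Qed.

Definition z3 (u : idx3) := [|| is_zero_ix u.1.1, is_zero_ix u.1.2 | is_zero_ix u.2].

Lemma sum0 (s : hv1 F) (f : F * hvix F -> idx3) (c : F) t :
  (forall k, k \in s -> f k = t -> k.1 = 0) ->
  \sum_(k <- s) (if f k == t then c * k.1 else 0) = 0.
Proof.
move=> H; rewrite big_seq big1 // => k kin.
by case: eqP => // /(H k kin) ->; rewrite mulr0.
Qed.

Lemma h_zero (tx : F * hvix F) (u t : idx3) : z3 u -> ~~ z3 t -> h tx u t = 0.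
Proof.
case: tx => d e; case: u => [[u1 u2] u3]; case: t => [[t1 t2] t3].
rewrite /z3 /h /rc /G /= !big_cat /= !big_map => Hz Ht.
rewrite !sum0 ?addr0 // => k kin /= [E1 E2 E3]; rewrite -E1 -E2 -E3 in Ht;
case/or3P: Hz => Z;
solve [exact: (hvbr_zero _ _ _ Z kin) | by move: Ht; rewrite Z ?orbT].
Qed.

Lemma sum_pick (r : seq idx3) x (A : idx3 -> F) : uniq r -> x \in r ->
  \sum_(u <- r) (if x == u then A u else 0) = A x.
Proof.
move=> U xin; rewrite -big_mkcond /= -big_filter.
have -> : [seq u <- r | x == u] = [:: x].
  rewrite (eq_filter (a2 := pred1 x)); last by move=> y /=; rewrite eq_sym.
  by rewrite filter_pred1_uniq.
by rewrite big_seq1.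
Qed.

Lemma group (w : hv3 F) (phi : idx3 -> F) :
  \sum_(tw <- w) tw.1 * phi tw.2 = \sum_(u <- undup (map snd w)) rc w u * phi u.
Proof.
rewrite /rc; under [RHS]eq_bigr do rewrite mulr_suml.
rewrite exchange_big /=; rewrite big_seq [RHS]big_seq; apply: eq_bigr => tw twin.
rewrite (eq_bigr (fun u => if tw.2 == u then tw.1 * phi u else 0)).
  by rewrite sum_pick ?undup_uniq // mem_undup; apply: map_f.
by move=> u _; case: ifP; rewrite ?mul0r.
Qed.

Lemma hb (nn : F) (q : bool) (y : F) :
  hvbr (false, nn) (q, y) = [:: (if q then y else y - nn, (q, nn + y))].
Proof. by case: q. Qed.

Lemma h_spec (nn a1 : F) (p1 : bool) (b2 b3 : hvix F) (u : idx3) :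
  u.1.1.2 - a1 != nn ->
  h (1, (false, nn)) u ((p1, nn + a1), b2, b3) =
  if u == ((p1, a1), b2, b3) then (if p1 then a1 else a1 - nn) else 0.
Proof.
case: u => [[[q y] [q2 y2]] [q3 y3]] /=; rewrite subr_eq => Hy.
rewrite /h /rc /G !hb /= !big_cons big_nil /= !addr0.
rewrite [X in _ + (X + _)](_ : _ = 0); last first.
  by case: eqP => // -[_ E _ _]; rewrite E eqxx in Hy.
rewrite [X in _ + (_ + X)](_ : _ = 0); last first.
  by case: eqP => // -[_ E _ _]; rewrite E eqxx in Hy.
rewrite !addr0 !mul1r.
case: eqP => [[-> /addrI -> -> ->]|NE]; first by rewrite eqxx.
case: eqP => // -[Eq Ey E2 E3]; case: NE; by rewrite Eq Ey E2 E3.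
Qed.

Lemma coef3E (w : hv3 F) b : coef3 w b = if z3 b then 0 else rc w b.
Proof. by []. Qed.

Lemma fwd (w : hv3 F) (x : hv1 F) :
  (forall b, coef3 w b = 0) -> forall b, coef3 (act3 x w) b = 0.
Proof.
move=> H b; rewrite coef3E; case: ifP => // nz.
rewrite rc_act big1 // => tx _.
rewrite (group w (fun u => h tx u b)) big1 // => u _.
case: (boolP (z3 u)) => zu; first by rewrite h_zero ?nz ?mulr0.
by have := H u; rewrite coef3E (negbTE zu) => ->; rewrite mul0r.
Qed.

Lemma bwd (w : hv3 F) :
  (forall n : nat, forall t, coef3 (act3 [:: (1, (false, n%:R))] w) t = 0) ->
  forall b, coef3 w b = 0.
Proof.
move=> H b; rewrite coef3E; case: ifP => // nzb.
case: b nzb => [[[p1 a1] b2] b3] nzb.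
have [n Hn] := exists_nat_notin (a1 :: - a1 :: [seq tw.2.1.1.2 - a1 | tw <- w]).
set nn : F := n%:R in Hn.
move: Hn; rewrite !in_cons !negb_or => /and3P [n1 n2 n3].
have := H n ((p1, nn + a1), b2, b3).
have nzt : z3 ((p1, nn + a1), b2, b3) = false.
  rewrite /z3 /= {1}/is_zero_ix /= addr_eq0 (negbTE n2) andbF /=.
  by move: nzb; rewrite /z3 /= => /negbT/norP [_ /norP [/negbTE -> /negbTE ->]].
rewrite coef3E nzt rc_act big_cons big_nil addr0.
rewrite big_seq (eq_bigr (fun tw => (if tw.2 == ((p1, a1), b2, b3) then tw.1 else 0)
    * (if p1 then a1 else a1 - nn))); last first.
  move=> tw twin; rewrite h_spec; last first.
    by apply: contra n3 => /eqP E; apply/mapP; exists tw => //; rewrite E.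
  by case: ifP; rewrite ?mulr0 ?mul0r.
rewrite -big_seq -mulr_suml => /eqP; rewrite mulf_eq0 => /orP [/eqP //|].
clear nzt; case: p1 nzb => /=.
  by rewrite /z3 /is_zero_ix /= => /norP [/negbTE ->].
by rewrite subr_eq0 eq_sym (negbTE n1).
Qed.
End Aux.

Theorem theorem3p1 (F : fieldType) (hchar : [pchar F] =i pred0)
  (Gamma : {pred F})
  (hsub : forall x y, x \in Gamma -> y \in Gamma -> x - y \in Gamma)
  (hZ : forall n : int, n%:~R \in Gamma)
  (r : hv2 F) (hr : valid2 Gamma r)
  (hIm : exists s : hv2 F, valid2 Gamma s /\ coef2 r =1 coef2 (one_minus_tau s)) :
  (forall b, coef3 (cyb r) b = 0) <->
  (forall x : hv1 F, valid1 Gamma x -> forall b, coef3 (act3 x (cyb r)) b = 0).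
Proof.
split.
  by move=> H x _; apply: fwd.
move=> H; apply: (@bwd F hchar) => n; apply: H.
by rewrite /valid1 /= /valid_ix /= andbT; have := hZ n%:Z.
Qed.
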